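(* Let $d\in\mathcal{S}G$ be such that $\pi\big(1+d\,\widehat{\sigma}(d)\big)$ is a unit of $\mathbb{F}G$. Then $\mathfrak{C}_{1,d}$ is a Hermitian LCD $2$-quasi-abelian code over $\mathcal{S}$ of rate $\frac12$, i.e. $\mathfrak{C}_{1,d}$ is a free $\mathcal{S}$-module of rank $n$ inside $(\mathcal{S}G)^2\cong\mathcal{S}^{2n}$.
   Context: Let $\mathcal{S}|\mathcal{R}$ be a Galois extension of degree $2$ of finite commutative chain rings, $\mathbf{m}$ the maximal ideal of $\mathcal{S}$, with residue fields $\mathcal{S}/\mathbf{m}=\mathbb{F}=\mathbb{F}_{q^2}$ and $\mathbb{F}_q$ for $\mathcal{R}$; let $\sigma$ generate $\mathrm{Aut}_{\mathcal{R}}(\mathcal{S})$ (order 2). Let $G$ be a finite abelian group of odd order $n$ with $\gcd(n,q)=1$. Define $\widehat{\sigma}:\mathcal{S}G\to\mathcal{S}G$, $\sum_ga_gg\mapsto\sum_g\sigma(a_g)g^{-1}$. The Hermitian form on $(\mathcal{S}G)^2$ is $\langle(a_1,b_1),(a_2,b_2)\rangle_H=\sum_g a_{1,g}\sigma(a_{2,g})+\sum_g b_{1,g}\sigma(b_{2,g})$. A $2$-quasi-abelian code over $\mathcal{S}$ is an $\mathcal{S}G$-submodule of $(\mathcal{S}G)^2$; it is Hermitian LCD if it meets its Hermitian dual only in $0$. $\mathfrak{C}_{c,d}=\{(uc,ud):u\in\mathcal{S}G\}$. The map $\pi:\mathcal{S}G\to\mathbb{F}G$ reduces coefficients modulo $\mathbf{m}$.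 *)

(* Defs.v *)
From HB Require Import structures.
From mathcomp Require Import all_boot all_order all_fingroup all_algebra.
Set Implicit Arguments. Unset Strict Implicit. Unset Printing Implicit Defensive.
Import GRing.Theory.
Local Open Scope ring_scope.

Definition is_ideal (R : finComNzRingType) (I : {set R}) : Prop :=
  [/\ 0 \in I, (forall x y, x \in I -> y \in I -> x + y \in I)
    & (forall r x, x \in I -> r * x \in I)].

Definition chain_ring (R : finComNzRingType) : Prop :=
  forall I J : {set R}, is_ideal I -> is_ideal J -> I \subset J \/ J \subset I.

(* "rho : R -> F is the reduction onto the residue field R/m":
   a surjective ring morphism onto a field whose kernel is the maximal ideal
   m of the chain ring R (= the set of non-units of R). *)
Definition residue_map (R : finComUnitRingType) (F : fieldType)
    (rho : {rmorphism R -> F}) : Prop :=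
  (forall y : F, exists x : R, rho x = y) /\
  (forall x : R, rho x = 0 <-> x \notin GRing.unit).

(* Galois extension S|R of degree 2 with Aut_R(S) generated by sigma of order 2;
   R is viewed inside S through the injective ring morphism iota. *)
Definition galois_ext2 (R S : finComUnitRingType) (iota : {rmorphism R -> S})
    (sigma : {rmorphism S -> S}) : Prop :=
  injective iota /\
      (forall r, sigma (iota r) = iota r) /\
      (forall x, sigma (sigma x) = x) /\
      (exists x, sigma x != x) /\
      (forall tau : {rmorphism S -> S}, bijective tau ->
          (forall r, tau (iota r) = iota r) -> tau =1 id \/ tau =1 sigma) /\
      (* Galois (Chase-Harrison-Rosenberg): fixed ring is R and the
         separability condition for the group {id, sigma} *)
      (forall x, sigma x = x -> exists r, x = iota r) /\
      (exists k (a b : 'I_k -> S),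
          \sum_(i < k) a i * b i = 1 /\ \sum_(i < k) a i * sigma (b i) = 0) /\
      (* degree 2: S is a free R-module of rank 2 *)
      (exists e1 e2 : S, forall x : S, exists! r : R * R,
          x = iota r.1 * e1 + iota r.2 * e2).

(* The group ring R G is represented by coefficient functions {ffun G -> R};
   note the pointwise ring structure of {ffun _ -> _} is NOT used as the
   group-ring product: the product is gmul below. *)

Definition gmul (R : pzRingType) (gT : finGroupType) (a b : {ffun gT -> R})
  : {ffun gT -> R} :=
  [ffun g => \sum_(h : gT) a h * b (h^-1 * g)%g].

Definition gone (R : pzRingType) (gT : finGroupType) : {ffun gT -> R} :=
  [ffun g => if g == 1%g then 1 else 0].

Definition gunit (R : pzRingType) (gT : finGroupType) (a : {ffun gT -> R}) : Prop :=
  exists b, gmul a b = gone R gT /\ gmul b a = gone R gT.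

Definition shat (S : pzRingType) (gT : finGroupType) (sigma : S -> S)
  (a : {ffun gT -> S}) : {ffun gT -> S} := [ffun g => sigma (a g^-1%g)].

Definition gmap (A B : Type) (gT : finGroupType) (f : A -> B)
  (a : {ffun gT -> A}) : {ffun gT -> B} := [ffun g => f (a g)].

Notation pair_ga S gT := ({ffun gT -> S} * {ffun gT -> S})%type.

Definition herm (S : finComUnitRingType) (gT : finGroupType) (sigma : S -> S)
  (x y : pair_ga S gT) : S :=
  \sum_(g : gT) x.1 g * sigma (y.1 g) + \sum_(g : gT) x.2 g * sigma (y.2 g).

Definition qa_code2 (S : finComUnitRingType) (gT : finGroupType)
  (C : {set pair_ga S gT}) : Prop :=
  [/\ (0 : pair_ga S gT) \in C,
      (forall x y, x \in C -> y \in C -> x + y \in C)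
    & (forall (u : {ffun gT -> S}) x, x \in C -> (gmul u x.1, gmul u x.2) \in C)].

Definition herm_dual (S : finComUnitRingType) (gT : finGroupType) (sigma : S -> S)
  (C : {set pair_ga S gT}) : {set pair_ga S gT} :=
  [set x | [forall y in C, herm sigma x y == 0]].

Definition herm_LCD (S : finComUnitRingType) (gT : finGroupType) (sigma : S -> S)
  (C : {set pair_ga S gT}) : Prop :=
  C :&: herm_dual sigma C = [set (0 : pair_ga S gT)].

Definition free_rank (S : finComUnitRingType) (gT : finGroupType)
  (C : {set pair_ga S gT}) (k : nat) : Prop :=
  exists b : 'I_k -> pair_ga S gT,
    (forall i, b i \in C) /\
    (forall x, x \in C -> exists! c : {ffun 'I_k -> S},
        x = ([ffun g => \sum_(i < k) c i * (b i).1 g],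
             [ffun g => \sum_(i < k) c i * (b i).2 g])).

Definition Ccd (S : finComUnitRingType) (gT : finGroupType)
  (c d : {ffun gT -> S}) : {set pair_ga S gT} :=
  [set (gmul u c, gmul u d) | u : {ffun gT -> S}].

(* Main.v *)
Require Import Defs.
From HB Require Import structures.
From mathcomp Require Import all_boot all_order all_fingroup all_algebra.
Set Implicit Arguments. Unset Strict Implicit. Unset Printing Implicit Defensive.
Import GRing.Theory.
Local Open Scope ring_scope.

Lemma gmulA (S : pzRingType) (gT : finGroupType) (a b c : {ffun gT -> S}) :
  gmul (gmul a b) c = gmul a (gmul b c).
Proof.
apply/ffunP => g; rewrite !ffunE.
under eq_bigr => h _ do rewrite ffunE mulr_suml.
rewrite exchange_big /=; apply: eq_bigr => k _.
rewrite ffunE mulr_sumr (reindex_inj (mulgI k)) /=.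
apply: eq_bigr => l _; rewrite mulKg mulrA invMg mulgA; done.
Qed.

Lemma gmulC (S : comPzRingType) (gT : finGroupType) (a b : {ffun gT -> S}) :
  abelian [set: gT] -> gmul a b = gmul b a.
Proof.
move=> hab; have cm : forall x y : gT, commute x y.
  by move=> x y; apply: (centsP hab); rewrite inE.
apply/ffunP => g; rewrite !ffunE.
have inj : injective (fun k : gT => g * k^-1)%g.
  by move=> x y /mulgI; apply: invg_inj.
rewrite (reindex_inj inj) /=.
apply: eq_bigr => k _; rewrite mulrC invMg invgK -mulgA mulVg mulg1.
by rewrite (cm g k^-1%g).
Qed.

Lemma gmul1r (S : pzRingType) (gT : finGroupType) (a : {ffun gT -> S}) :
  gmul a (gone S gT) = a.
Proof.
apply/ffunP => g; rewrite ffunE (bigD1 g) //= big1 ?ffunE ?mulVg ?eqxx ?mulr1 ?addr0 //.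
move=> h hg; rewrite ffunE -eq_mulVg1 (negbTE hg) mulr0 //.
Qed.

Lemma gmul1l (S : pzRingType) (gT : finGroupType) (a : {ffun gT -> S}) :
  gmul (gone S gT) a = a.
Proof.
apply/ffunP => g; rewrite ffunE (bigD1 1%g) //= big1 ?ffunE ?eqxx ?invg1 ?mul1g ?mul1r ?addr0 //.
by move=> h hg; rewrite ffunE (negbTE hg) mul0r.
Qed.

Lemma gmulDl (S : pzRingType) (gT : finGroupType) (a b c : {ffun gT -> S}) :
  gmul (a + b) c = gmul a c + gmul b c.
Proof.
apply/ffunP => g; rewrite !ffunE -big_split; apply: eq_bigr => h _.
by rewrite ffunE mulrDl.
Qed.

Lemma gmulDr (S : pzRingType) (gT : finGroupType) (a b c : {ffun gT -> S}) :
  gmul a (b + c) = gmul a b + gmul a c.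
Proof.
apply/ffunP => g; rewrite !ffunE -big_split; apply: eq_bigr => h _.
by rewrite ffunE mulrDr.
Qed.

Lemma gmul0l (S : pzRingType) (gT : finGroupType) (c : {ffun gT -> S}) :
  gmul 0 c = 0.
Proof. by apply/ffunP => g; rewrite !ffunE big1 // => h _; rewrite ffunE mul0r. Qed.

Definition gsc (S : pzRingType) (gT : finGroupType) (x : S) (a : {ffun gT -> S}) :
  {ffun gT -> S} := [ffun g => x * a g].

Lemma gmulZl (S : comPzRingType) (gT : finGroupType) x (a b : {ffun gT -> S}) :
  gmul (gsc x a) b = gsc x (gmul a b).
Proof.
apply/ffunP => g; rewrite !ffunE mulr_sumr; apply: eq_bigr => h _.
by rewrite ffunE mulrA.
Qed.

Lemma gmulZr (S : comPzRingType) (gT : finGroupType) x (a b : {ffun gT -> S}) :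
  gmul a (gsc x b) = gsc x (gmul a b).
Proof.
apply/ffunP => g; rewrite !ffunE mulr_sumr; apply: eq_bigr => h _.
by rewrite ffunE mulrCA.
Qed.

Lemma shatM (S : comPzRingType) (gT : finGroupType) (sigma : {rmorphism S -> S})
  (a b : {ffun gT -> S}) : abelian [set: gT] ->
  shat sigma (gmul a b) = gmul (shat sigma a) (shat sigma b).
Proof.
move=> hab; have cm : forall x y : gT, commute x y.
  by move=> x y; apply: (centsP hab); rewrite inE.
apply/ffunP => g; rewrite !ffunE rmorph_sum.
rewrite (reindex_inj (inv_inj (@invgK gT))) /=.
apply: eq_bigr => k _; rewrite !ffunE rmorphM invgK invMg invgK.
by rewrite (cm k g^-1%g).
Qed.

Lemma trace_herm (S : comPzRingType) (gT : finGroupType) (sigma : {rmorphism S -> S})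
  (a b : {ffun gT -> S}) :
  \sum_g a g * sigma (b g) = gmul a (shat sigma b) 1%g.
Proof.
rewrite ffunE; apply: eq_bigr => h _; rewrite ffunE mulg1 invgK. done.
Qed.

Lemma gmap_mul (S F : comPzRingType) (gT : finGroupType) (rho : {rmorphism S -> F})
  (a b : {ffun gT -> S}) : gmap rho (gmul a b) = gmul (gmap rho a) (gmap rho b).
Proof.
apply/ffunP => g; rewrite !ffunE rmorph_sum; apply: eq_bigr => h _.
by rewrite !ffunE rmorphM.
Qed.

Lemma gmap_one (S F : comNzRingType) (gT : finGroupType) (rho : {rmorphism S -> F}) :
  gmap rho (gone S gT) = gone F gT.
Proof. by apply/ffunP => g; rewrite !ffunE; case: eqP; rewrite ?rmorph1 ?rmorph0. Qed.

Lemma nonunit_nilp (S : finComUnitRingType) (F : fieldType) (rho : {rmorphism S -> F}) :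
  residue_map rho -> forall x : S, x \notin GRing.unit -> exists n, x ^+ n = 0.
Proof.
move=> [_ hker] x hx.
have hx0 : rho x = 0 by apply/hker.
pose f := fun i : 'I_#|S|.+1 => x ^+ i.
have : ~~ injectiveb f.
  apply/negP => /injectiveP finj; have := leq_card f finj.
  by rewrite card_ord ltnn.
case/injectivePn => i [j hij hfij].
have key : forall i j : nat, (i < j)%N -> x ^+ i = x ^+ j -> x ^+ i = 0.
  move=> i' j' lt e.
  have hu : (1 - x ^+ (j' - i')) \is a GRing.unit.
    apply/negbNE/negP => /hker; rewrite rmorphB rmorph1 rmorphXn hx0 expr0n.
    rewrite subn_eq0 leqNgt lt /= subr0 => /eqP; by rewrite oner_eq0.
  apply: (mulIr hu); rewrite mul0r mulrBr mulr1 -exprD subnKC ?(ltnW lt) //.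
  by rewrite e subrr.
case: (ltngtP i j) => h.
- by exists i; apply: key h hfij.
- by exists j; apply: key h (esym hfij).
- by move: hij; rewrite -val_eqE /= h eqxx.
Qed.

Lemma ideal_mul (S : finComUnitRingType) (x : S) : is_ideal [set x * s | s : S].
Proof.
split.
- by apply/imsetP; exists 0; [by [] | rewrite mulr0].
- move=> a b /imsetP[s _ ->] /imsetP[t _ ->]; apply/imsetP; exists (s + t).
    by [].
  by rewrite mulrDr.
- move=> r a /imsetP[s _ ->]; apply/imsetP; exists (r * s).
    by [].
  by rewrite mulrCA.
Qed.

Lemma principal_max (S : finComUnitRingType) (F : fieldType) (rho : {rmorphism S -> F}) :
  chain_ring S -> residue_map rho ->
  exists g, g \notin GRing.unit /\ forall y : S, y \notin GRing.unit -> exists s, y = g * s.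
Proof.
move=> hch [_ hker].
pose I (x : S) := [set x * s | s : S].
have idI : forall x, is_ideal (I x) by move=> x; apply: ideal_mul.
have h0 : (0 : S) \notin GRing.unit by rewrite unitr0.
case: (@arg_maxnP S 0 (fun x => x \notin GRing.unit) (fun x => #|I x|) h0) => gm hg gmax.
exists gm; split => // y hy.
have yI : y \in I y by apply/imsetP; exists 1; rewrite ?mulr1.
case: (hch _ _ (idI y) (idI gm)) => sub.
- by move/subsetP: sub => /(_ y yI) /imsetP[s _ ->]; exists s.
- have ceq : I gm = I y.
    by apply/eqP; rewrite eqEcard sub /=; apply: gmax.
  by move: yI; rewrite -ceq => /imsetP[s _ ->]; exists s.
Qed.

Definition delta (S : pzRingType) (gT : finGroupType) (g : gT) : {ffun gT -> S} :=
  [ffun h => (h == g)%:R].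

Lemma delta_eval (S : comPzRingType) (gT : finGroupType) (sigma : {rmorphism S -> S})
  (w : {ffun gT -> S}) g : gmul w (shat sigma (delta S g)) 1%g = w g.
Proof.
rewrite -trace_herm (bigD1 g) //= big1 ?addr0.
  by rewrite ffunE eqxx rmorph1 mulr1.
by move=> h hg; rewrite ffunE (negbTE hg) rmorph0 mulr0.
Qed.

Lemma herm_formula (S : finComUnitRingType) (gT : finGroupType) (sigma : {rmorphism S -> S})
  (d u v : {ffun gT -> S}) : abelian [set: gT] ->
  herm sigma (gmul u (gone S gT), gmul u d) (gmul v (gone S gT), gmul v d) =
  gmul (gmul u (gone S gT + gmul d (shat sigma d))) (shat sigma v) 1%g.
Proof.
move=> hab; rewrite /herm /= !gmul1r !trace_herm.
rewrite gmulDr gmul1r gmulDl [RHS]ffunE; congr (_ + _).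
rewrite shatM //.
have -> : gmul (gmul u d) (gmul (shat sigma v) (shat sigma d)) =
   gmul u (gmul d (gmul (shat sigma d) (shat sigma v))).
  by rewrite gmulA (gmulC (shat sigma v)).
by rewrite !gmulA.
Qed.

Lemma unit_cancel (S : finComUnitRingType) (F : fieldType) (rho : {rmorphism S -> F})
  (gT : finGroupType) (a : {ffun gT -> S}) (b' : {ffun gT -> F}) :
  chain_ring S -> residue_map rho ->
  gmul (gmap rho a) b' = gone F gT ->
  forall u, gmul u a = 0 -> u = 0.
Proof.
move=> hch hres hab u hu.
have [surj hker] := hres.
have ex : forall y : F, exists x : S, rho x == y.
  by move=> y; have [x hx] := surj y; exists x; apply/eqP.
pose b := [ffun g => xchoose (ex (b' g))].
have hb : gmap rho b = b'.
  by apply/ffunP => g; rewrite !ffunE; apply/eqP; apply: (xchooseP (ex (b' g))).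
pose m := gmul a b - gone S gT.
have hm : forall g, m g \notin GRing.unit.
  move=> g; apply/hker.
  have e : rho (gmul a b g) = gone F gT g.
    by rewrite -hab -hb -gmap_mul [RHS]ffunE.
  have e2 : rho (gone S gT g) = gone F gT g.
    by rewrite -(gmap_one gT rho) [RHS]ffunE.
  by rewrite /m ffunE [X in _ + X]ffunE rmorphB e e2 subrr.
have [gm [hg hgm]] := principal_max hch hres.
have ex2 : forall g, exists s, m g == gm * s.
  by move=> g; have [s hs] := hgm _ (hm g); exists s; apply/eqP.
pose m' := [ffun g => xchoose (ex2 g)].
have em' : forall g, m g = gm * m' g.
  by move=> g; rewrite [in RHS]ffunE; apply/eqP; exact: (xchooseP (ex2 g)).
have em : m = gsc gm m'.
  by apply/ffunP => g; rewrite /gsc [RHS]ffunE; exact: em'.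
have hum : u = - gmul u m.
  have : gmul u (gmul a b) = 0 by rewrite -gmulA hu gmul0l.
  have -> : gmul a b = gone S gT + m by rewrite /m addrC subrK.
  by rewrite gmulDr gmul1r => /eqP; rewrite addr_eq0 => /eqP.
have pw : forall n, exists w, u = gsc (gm ^+ n) w.
  elim=> [|n [w hw]].
    by exists u; apply/ffunP => g; rewrite !ffunE expr0 mul1r.
  exists [ffun g => - gmul w m' g].
  apply/ffunP => g; rewrite {1}hum {1}hw em gmulZl gmulZr !ffunE.
  by rewrite exprSr mulrN mulrA.
have [N hN] := nonunit_nilp hres hg.
have [w hw] := pw N.
by rewrite hw; apply/ffunP => g; rewrite !ffunE hN mul0r.
Qed.

Lemma gmul_delta (S : pzRingType) (gT : finGroupType) (k : gT) (e : {ffun gT -> S}) g :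
  gmul (delta S k) e g = e (k^-1 * g)%g.
Proof.
rewrite ffunE (bigD1 k) //= big1 ?ffunE ?eqxx ?mul1r ?addr0 //.
by move=> h hk; rewrite ffunE (negbTE hk) mul0r.
Qed.

Lemma rep_sum (S : pzRingType) (gT : finGroupType) (c : {ffun 'I_#|gT| -> S})
  (e : {ffun gT -> S}) :
  [ffun g => \sum_(i < #|gT|) c i * gmul (delta S (enum_val i)) e g] =
  gmul [ffun h => c (enum_rank h)] e.
Proof.
apply/ffunP => g; rewrite !ffunE.
rewrite [RHS](reindex (@enum_val gT gT)) /=; last first.
  by exists enum_rank => x _; [apply: enum_valK | apply: enum_rankK].
apply: eq_bigr => i _; rewrite gmul_delta ffunE enum_valK //.
Qed.

Theorem mainTheorem15
  (R S : finComUnitRingType) (iota : {rmorphism R -> S})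
  (sigma : {rmorphism S -> S})
  (FR FS : finFieldType) (rhoR : {rmorphism R -> FR}) (rhoS : {rmorphism S -> FS})
  (q : nat) (gT : finGroupType)
  (chainR : chain_ring R) (chainS : chain_ring S)
  (hgal : galois_ext2 iota sigma)
  (hresR : residue_map rhoR) (hresS : residue_map rhoS)
  (hq : #|FR| = q) (hq2 : #|FS| = (q ^ 2)%N)
  (habel : abelian [set: gT]) (hodd : odd #|gT|) (hcop : coprime #|gT| q)
  (d : {ffun gT -> S}) :
  gunit (gmap rhoS (gone S gT + gmul d (shat sigma d))) ->
  [/\ qa_code2 (Ccd (gone S gT) d),
      herm_LCD sigma (Ccd (gone S gT) d)
    & free_rank (Ccd (gone S gT) d) #|gT|].
Proof.
case=> b' [hb' _].
have canc := unit_cancel chainS hresS hb'.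
have zC : (0 : pair_ga S gT) \in Ccd (gone S gT) d.
  by apply/imsetP; exists 0 => //; rewrite !gmul0l.
split.
- split => //.
  + move=> x y /imsetP[u _ ->] /imsetP[v _ ->]; apply/imsetP; exists (u + v) => //.
    by rewrite !gmulDl.
  + move=> w x /imsetP[u _ ->]; apply/imsetP; exists (gmul w u) => //=.
    by rewrite !gmulA.
- apply/setP => x; rewrite !inE; apply/idP/idP.
  + case/andP => /imsetP[u _ ->] /forallP hd.
    have hw : gmul u (gone S gT + gmul d (shat sigma d)) = 0.
      apply/ffunP => g.
      have := hd (gmul (delta S g) (gone S gT), gmul (delta S g) d).
      rewrite (_ : _ \in _ = true); last first.
        by apply/imsetP; exists (delta S g).
      rewrite /= herm_formula // delta_eval => /eqP ->.
      by rewrite ffunE.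
    by rewrite (canc u hw) !gmul0l.
  + move/eqP => ->; rewrite zC /=; apply/forallP => y; apply/implyP => _.
    by rewrite /herm !big1 ?addr0 // => g _; rewrite ffunE mul0r.
- exists (fun i => (gmul (delta S (enum_val i)) (gone S gT), gmul (delta S (enum_val i)) d)).
  split.
    by move=> i; apply/imsetP; exists (delta S (enum_val i)).
  move=> x /imsetP[u _ ->].
  exists [ffun i => u (enum_val i)]; split.
    have eu : [ffun h => [ffun i => u (enum_val i)] (enum_rank h)] = u.
      by apply/ffunP => h; rewrite !ffunE enum_rankK.
    by rewrite /= !rep_sum eu.
  move=> c' /= [e1 _].
  move: e1; rewrite rep_sum !gmul1r => ->.
  by apply/ffunP => i; rewrite !ffunE enum_valK.
Qed.
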